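(* Let $\mathsf{G}M_0>0$, $R_0>0$, $\Omega\in\mathbb{R}$ and $R>R_0$. For $\bm{x}=(x^1,x^2,x^3)\in\mathbb{R}^3$ put $r=\|\bm{x}\|$, $\varpi=\sqrt{(x^1)^2+(x^2)^2}$, and let $$\Upsilon(\bm{x})=\mathsf{G}M_0\Big(\frac1r-\frac1R\Big)+\frac{\Omega^2}{2}\varpi^2 .$$ Let $\mathfrak{U}_0$ be the connected component of the open set $\{\bm{x}:\ r>R_0,\ \Upsilon(\bm{x})>0\}$ which contains the shell $\{R_0<r<R\}$, and put $\kappa=\dfrac{\Omega^2R_0^3}{2\mathsf{G}M_0}$. Then the following are equivalent: (i) $\mathfrak{U}_0$ is bounded, i.e. the axially and equatorially symmetric static stationary density $\rho=\big(\frac{\gamma-1}{\mathsf{A}\gamma}\Upsilon\big)^{1/(\gamma-1)}1_{\mathfrak{U}_0}$ (with zero relative velocity, constants $\mathsf{A}>0$, $1<\gamma<2$) is compactly supported, its stratosphere height at the North Pole being $R-R_0$; (ii) $\kappa\le \dfrac{4}{27}\Big(\dfrac{R_0}{R}\Big)^3$.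
   Context: This concerns static stationary solutions ($\bm v=\bm 0$) of the isentropic compressible Euler equations in a frame rotating with constant angular velocity $\Omega$ about the $x^3$-axis, outside the ball $\{r\le R_0\}$, with geopotential $-\mathsf{G}M_0/r-\Omega^2\varpi^2/2$ and pressure $P=\mathsf{A}\rho^\gamma$; for such solutions $\Upsilon=\frac{\mathsf{A}\gamma}{\gamma-1}\rho^{\gamma-1}$ equals $-(\text{geopotential})-\mathsf{G}M_0/R$ where positive. *)

(* Defs.v *)
From HB Require Import structures.
From mathcomp Require Import all_boot all_order all_algebra.
From mathcomp Require Import all_classical all_reals all_analysis.
Set Implicit Arguments. Unset Strict Implicit. Unset Printing Implicit Defensive.
Import Order.TTheory GRing.Theory Num.Theory.
Import numFieldNormedType.Exports.
Local Open Scope ring_scope.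
Local Open Scope classical_set_scope.

(* Points of R^3 are row vectors 'rV[R]_3 (product = Euclidean topology). *)
Definition x1 {R : realType} (x : 'rV[R]_3) : R := x ord0 (@Ordinal 3 0 isT).
Definition x2 {R : realType} (x : 'rV[R]_3) : R := x ord0 (@Ordinal 3 1 isT).
Definition x3 {R : realType} (x : 'rV[R]_3) : R := x ord0 (@Ordinal 3 2 isT).

Definition rad {R : realType} (x : 'rV[R]_3) : R :=
  Num.sqrt (x1 x ^+ 2 + x2 x ^+ 2 + x3 x ^+ 2).
Definition varpi {R : realType} (x : 'rV[R]_3) : R :=
  Num.sqrt (x1 x ^+ 2 + x2 x ^+ 2).

Definition Upsilon {R : realType} (GM0 Om Rr : R) (x : 'rV[R]_3) : R :=
  GM0 * ((rad x)^-1 - Rr^-1) + Om ^+ 2 / 2 * varpi x ^+ 2.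

Definition posregion {R : realType} (GM0 R0 Om Rr : R) : set 'rV[R]_3 :=
  [set x | R0 < rad x /\ 0 < Upsilon GM0 Om Rr x].

Definition shell {R : realType} (R0 Rr : R) : set 'rV[R]_3 :=
  [set x | R0 < rad x /\ rad x < Rr].

Definition bounded3 {R : realType} (A : set 'rV[R]_3) : Prop :=
  exists M : R, forall x, A x -> rad x <= M.

(* Main.v *)
Require Import Defs.
From HB Require Import structures.
From mathcomp Require Import all_boot all_order all_algebra.
From mathcomp Require Import all_classical all_reals all_analysis.
From mathcomp Require Import ring lra.
Import Order.TTheory GRing.Theory Num.Theory.
Import numFieldNormedType.Exports.
Local Open Scope ring_scope.
Local Open Scope classical_set_scope.

Section S.
Variable R : realType.

Lemma cont_x1 : continuous (@x1 R).
Proof. exact: coord_continuous. Qed.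
Lemma cont_x2 : continuous (@x2 R).
Proof. exact: coord_continuous. Qed.
Lemma cont_x3 : continuous (@x3 R).
Proof. exact: coord_continuous. Qed.

Lemma contD_ {T : topologicalType} (f g : T -> R) :
  continuous f -> continuous g -> continuous (fun x => f x + g x).
Proof. move=> cf cg x; exact: (continuousD (cf x) (cg x)). Qed.

Lemma cont_sq {T : topologicalType} (f : T -> R) : continuous f -> continuous (fun x => f x ^+ 2).
Proof. move=> cf x; exact: (@continuous_comp _ _ _ f (fun y => y ^+ 2) x (cf x) (@exprn_continuous R 2 (f x))). Qed.

Lemma cont_ps : continuous (fun x : 'rV[R]_3 => x1 x ^+ 2 + x2 x ^+ 2).
Proof. apply: contD_; [exact: cont_sq cont_x1|exact: cont_sq cont_x2]. Qed.

Lemma cont_rs : continuous (fun x : 'rV[R]_3 => x1 x ^+ 2 + x2 x ^+ 2 + x3 x ^+ 2).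
Proof. apply: contD_; [exact: cont_ps| exact: cont_sq cont_x3]. Qed.

Lemma cont_rad : continuous (@Defs.rad R).
Proof. move=> x; exact: (continuous_comp (cont_rs x) (@sqrt_continuous R _)). Qed.


Lemma ineq_equiv (GM0 R0 Om Rr : R) : 0 < GM0 -> 0 < R0 -> 0 < Rr ->
  (Om ^+ 2 * R0 ^+ 3 / (2 * GM0) <= 4 / 27 * (R0 / Rr) ^+ 3) <->
  (Om ^+ 2 * 27 * Rr ^+ 3 <= 8 * GM0).
Proof.
move=> hG hR0 hR.
have -> : (Om ^+ 2 * R0 ^+ 3 / (2 * GM0) <= 4 / 27 * (R0 / Rr) ^+ 3) =
  (0 <= (8 * GM0 - Om ^+ 2 * 27 * Rr ^+ 3) * (R0 ^+ 3 / (54 * GM0 * Rr ^+ 3))).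
  rewrite -subr_ge0; congr (0 <= _); field.
  by rewrite !gt_eqF.
rewrite pmulr_lge0 ?subr_ge0 //.
by apply: divr_gt0; rewrite ?exprn_gt0 // !mulr_gt0 // ?exprn_gt0.
Qed.

Lemma key_le0 (GM0 Om Rr r p : R) : 0 < GM0 -> 0 < Rr ->
  Om ^+ 2 * 27 * Rr ^+ 3 <= 8 * GM0 -> 3 / 2 * Rr <= r -> 0 <= p ->
  p <= (3 / 2 * Rr) ^+ 2 ->
  GM0 * (r^-1 - Rr^-1) + Om ^+ 2 / 2 * p <= 0.
Proof.
move=> hG hR hO hr hp0 hp.
have r0 : 0 < r by apply: lt_le_trans hr; rewrite mulr_gt0.
set w := Rr^-1; set u := r^-1.
have hw : Rr * w = 1 by rewrite mulfV ?gt_eqF.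
have hu : r * u = 1 by rewrite mulfV ?gt_eqF.
have w0 : 0 < w by rewrite invr_gt0.
have u0 : 0 < u by rewrite invr_gt0.
have hu2 : u <= 2 / 3 * w.
  have : u * (3 / 2 * Rr) <= u * r by rewrite ler_pM2l.
  nra.
have h1 : Om ^+ 2 / 2 * p <= Om ^+ 2 / 2 * (9 / 4 * Rr ^+ 2).
  by apply: ler_wpM2l; [rewrite mulr_ge0 // sqr_ge0 | lra].
have h2 : Om ^+ 2 / 2 * (9 / 4 * Rr ^+ 2) = Om ^+ 2 * 27 * Rr ^+ 3 * w / 24.
  rewrite /w; field; by rewrite gt_eqF.
have h3 : Om ^+ 2 * 27 * Rr ^+ 3 * w <= 8 * GM0 * w by rewrite ler_pM2r.
nra.
Qed.

Lemma key_gt0 (GM0 Om Rr s : R) : 0 < GM0 -> 0 < Rr ->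
  8 * GM0 < Om ^+ 2 * 27 * Rr ^+ 3 -> 0 < s ->
  0 < GM0 * (s^-1 - Rr^-1) + Om ^+ 2 / 2 * s ^+ 2.
Proof.
move=> hG hR hO hs.
set w := Rr^-1; set u := s^-1.
have hw : Rr * w = 1 by rewrite mulfV ?gt_eqF.
have hu : s * u = 1 by rewrite mulfV ?gt_eqF.
have w0 : 0 < w by rewrite invr_gt0.
have u0 : 0 < u by rewrite invr_gt0.
have h1 : 8 * GM0 * w ^+ 3 < Om ^+ 2 * 27.
  have h1' : 8 * GM0 * w ^+ 3 < Om ^+ 2 * 27 * Rr ^+ 3 * w ^+ 3 by rewrite ltr_pM2r ?exprn_gt0.
  have e3 : Rr ^+ 3 * w ^+ 3 = 1 by rewrite -exprMn hw expr1n.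
  by move: h1'; rewrite -[X in _ < X]mulrA e3 mulr1.
set y := w * s.
have y0 : 0 < y by rewrite mulr_gt0.
have hq : 0 <= (y - 3/2) ^+ 2 * (4 / 27 * y + 4 / 9) by rewrite mulr_ge0 ?sqr_ge0 //; lra.
have e1 : (y - 3/2) ^+ 2 * (4 / 27 * y + 4 / 9) = 1 - y + 4 / 27 * y ^+ 3.
  by rewrite /y; field.
have h2 : 0 <= GM0 * (u - w) + 4 / 27 * GM0 * w ^+ 3 * s ^+ 2.
  have : 0 <= GM0 * u * (1 - y + 4 / 27 * y ^+ 3).
    by rewrite -e1; apply: mulr_ge0 => //; apply: mulr_ge0; apply: ltW.
  have -> : GM0 * u * (1 - y + 4 / 27 * y ^+ 3) = GM0 * u - GM0 * w * (s * u) + 4 / 27 * GM0 * w ^+ 3 * s ^+ 2 * (s * u).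
    by rewrite /y; ring.
  by rewrite hu !mulr1 mulrBr.
have h3 : 4 / 27 * GM0 * w ^+ 3 * s ^+ 2 < Om ^+ 2 / 2 * s ^+ 2.
  rewrite ltr_pM2r ?exprn_gt0 //; lra.
lra.
Qed.

Definition e1 : 'rV[R]_3 := \row_(j < 3) (if (j == 0 :> nat) then 1 else 0).

Lemma x1D (a b : R) (u w : 'rV[R]_3) : x1 (a *: u + b *: w) = a * x1 u + b * x1 w.
Proof. by rewrite /x1 !mxE. Qed.
Lemma x2D (a b : R) (u w : 'rV[R]_3) : x2 (a *: u + b *: w) = a * x2 u + b * x2 w.
Proof. by rewrite /x2 !mxE. Qed.
Lemma x3D (a b : R) (u w : 'rV[R]_3) : x3 (a *: u + b *: w) = a * x3 u + b * x3 w.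
Proof. by rewrite /x3 !mxE. Qed.
Lemma x1Z (a : R) (u : 'rV[R]_3) : x1 (a *: u) = a * x1 u.
Proof. by rewrite /x1 !mxE. Qed.
Lemma x2Z (a : R) (u : 'rV[R]_3) : x2 (a *: u) = a * x2 u.
Proof. by rewrite /x2 !mxE. Qed.
Lemma x3Z (a : R) (u : 'rV[R]_3) : x3 (a *: u) = a * x3 u.
Proof. by rewrite /x3 !mxE. Qed.
Lemma x1e : x1 e1 = 1. Proof. by rewrite /x1 /e1 mxE. Qed.
Lemma x2e : x2 e1 = 0. Proof. by rewrite /x2 /e1 mxE. Qed.
Lemma x3e : x3 e1 = 0. Proof. by rewrite /x3 /e1 mxE. Qed.

Lemma radZ (a : R) (u : 'rV[R]_3) : Defs.rad (a *: u) = `|a| * Defs.rad u.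
Proof.
rewrite /Defs.rad !(x1Z, x2Z, x3Z) !exprMn -!mulrDr sqrtrM ?sqr_ge0 //.
by rewrite sqrtr_sqr.
Qed.
Lemma varpiZ (a : R) (u : 'rV[R]_3) : varpi (a *: u) = `|a| * varpi u.
Proof.
rewrite /varpi !(x1Z, x2Z) !exprMn -!mulrDr sqrtrM ?sqr_ge0 //.
by rewrite sqrtr_sqr.
Qed.
Lemma rade : Defs.rad e1 = 1.
Proof. by rewrite /Defs.rad x1e x2e x3e expr1n expr0n /= !addr0 sqrtr1. Qed.
Lemma varpie : varpi e1 = 1.
Proof. by rewrite /varpi x1e x2e expr1n expr0n /= !addr0 sqrtr1. Qed.

Lemma rad_sq (u : 'rV[R]_3) : Defs.rad u ^+ 2 = x1 u ^+ 2 + x2 u ^+ 2 + x3 u ^+ 2.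
Proof. by rewrite sqr_sqrtr // !addr_ge0 ?sqr_ge0. Qed.
Lemma varpi_sq (u : 'rV[R]_3) : varpi u ^+ 2 = x1 u ^+ 2 + x2 u ^+ 2.
Proof. by rewrite sqr_sqrtr // !addr_ge0 ?sqr_ge0. Qed.
Lemma rad_ge0 (u : 'rV[R]_3) : 0 <= Defs.rad u. Proof. exact: sqrtr_ge0. Qed.
Lemma varpi_ge0 (u : 'rV[R]_3) : 0 <= varpi u. Proof. exact: sqrtr_ge0. Qed.
Lemma varpi_le_rad (u : 'rV[R]_3) : varpi u <= Defs.rad u.
Proof. by rewrite ler_sqrt ?lerDl ?sqr_ge0 // !addr_ge0 ?sqr_ge0. Qed.


Lemma ups_shell (GM0 Om Rr : R) (x : 'rV[R]_3) : 0 < GM0 -> 0 < Defs.rad x ->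
  Defs.rad x < Rr -> 0 < Upsilon GM0 Om Rr x.
Proof.
move=> hG hx hxR; rewrite /Upsilon.
have hR : 0 < Rr by apply: lt_trans hxR.
have : Rr^-1 < (Defs.rad x)^-1 by rewrite ltf_pV2 ?posrE.
move=> h.
have a : 0 < GM0 * ((Defs.rad x)^-1 - Rr^-1) by rewrite mulr_gt0 // subr_gt0.
have b : 0 <= Om ^+ 2 / 2 * varpi x ^+ 2 by rewrite mulr_ge0 ?sqr_ge0 // mulr_ge0 ?sqr_ge0.
lra.
Qed.

Lemma partA (GM0 R0 Om Rr : R) (x0 : 'rV[R]_3) : 0 < GM0 -> 0 < R0 -> R0 < Rr ->
  shell R0 Rr x0 -> Om ^+ 2 * 27 * Rr ^+ 3 <= 8 * GM0 ->
  bounded3 (connected_component (posregion GM0 R0 Om Rr) x0).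
Proof.
move=> hG hR0 hR [s1 s2] hO.
have hRr : 0 < Rr by apply: lt_trans hR.
set A := posregion GM0 R0 Om Rr; set C := connected_component A x0.
set r1 := 3 / 2 * Rr.
have r1p : 0 < r1 by rewrite mulr_gt0.
set g := fun x : 'rV[R]_3 => x1 x ^+ 2 + x2 x ^+ 2.
have Ax0 : A x0 by split => //; apply: ups_shell => //; apply: lt_trans s1.
have Cx0 : C x0 by apply: connected_component_refl.
have keyA : forall z, A z -> r1 <= Defs.rad z -> g z <= r1 ^+ 2 -> False.
  move=> z [_ Uz] hr hg.
  have : Upsilon GM0 Om Rr z <= 0.
    rewrite /Upsilon; apply: key_le0 => //; first exact: sqr_ge0.
    by rewrite varpi_sq.
  by rewrite leNgt Uz.
have claim : forall y, C y -> g y < r1 ^+ 2.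
  move=> y Cy; rewrite ltNge; apply/negP => hy.
  have hI : is_interval (g @` C).
    apply/connected_intervalP/connected_continuous_connected.
      exact: component_connected.
    exact/continuous_subspaceT/cont_ps.
  have hx0 : g x0 <= r1 ^+ 2.
    have h1 : g x0 <= Defs.rad x0 ^+ 2 by rewrite rad_sq lerDl sqr_ge0.
    apply: (le_trans h1); rewrite /r1; nra.
  have [z Cz gz] : (g @` C) (r1 ^+ 2).
    by apply: (hI (g x0) (g y)); [exists x0|exists y|rewrite hx0 hy].
  have Az := connected_component_sub Cz.
  apply: (keyA z Az); last by rewrite gz.
  have h1 : g z <= Defs.rad z ^+ 2 by rewrite rad_sq lerDl sqr_ge0.
  have := rad_ge0 z; rewrite gz in h1; nra.
exists r1 => x Cx; rewrite leNgt; apply/negP => hx.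
apply: (keyA x (connected_component_sub Cx) (ltW hx)).
exact/ltW/claim.
Qed.


Lemma cont_idR : continuous (fun t : R => t).
Proof. by move=> t; apply: cvg_id. Qed.
Lemma cont_cstR (c : R) : continuous (fun _ : R => c).
Proof. exact: cst_continuous. Qed.
Lemma contM_ (f g : R -> R) : continuous f -> continuous g -> continuous (fun x => f x * g x).
Proof. move=> cf cg x; exact: (continuousM (cf x) (cg x)). Qed.
Lemma contB_ (f g : R -> R) : continuous f -> continuous g -> continuous (fun x => f x - g x).
Proof. move=> cf cg x; exact: (continuousB (cf x) (cg x)). Qed.
Lemma contVD (f g : R -> 'rV[R]_3) : continuous f -> continuous g -> continuous (fun x => f x + g x).
Proof. move=> cf cg x; exact: (continuousD (cf x) (cg x)). Qed.
Lemma contVZ (s : R -> R) (f : R -> 'rV[R]_3) : continuous s -> continuous f -> continuous (fun x => s x *: f x).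
Proof. move=> cs cf x; exact: (continuousZ (cs x) (cf x)). Qed.


Lemma partB (GM0 R0 Om Rr : R) (x0 : 'rV[R]_3) : 0 < GM0 -> 0 < R0 -> R0 < Rr ->
  shell R0 Rr x0 -> 8 * GM0 < Om ^+ 2 * 27 * Rr ^+ 3 ->
  ~ bounded3 (connected_component (posregion GM0 R0 Om Rr) x0).
Proof.
move=> hG hR0 hR [s1 s2] hO [M hM].
have hRr : 0 < Rr by apply: lt_trans hR.
set A := posregion GM0 R0 Om Rr; set C := connected_component A x0.
set r0 := Defs.rad x0.
have r0p : 0 < r0 by apply: lt_trans s1.
set a := x1 x0.
set sg : R := if 0 <= a then 1 else -1.
have sga : sg * a = `|a|.
  by rewrite /sg; case: ifP => h; [rewrite mul1r ger0_norm | rewrite mulN1r ler0_norm // ltW // ltNge h].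
have sg2 : sg ^+ 2 = 1 by rewrite /sg; case: ifP => _; rewrite ?sqrrN expr1n.
have nsg : `|sg| = 1 by rewrite /sg; case: ifP => _; rewrite ?normrN normr1.
have a2 : `|a| ^+ 2 = a ^+ 2 by rewrite real_normK ?num_real.
have r02 : r0 ^+ 2 = a ^+ 2 + x2 x0 ^+ 2 + x3 x0 ^+ 2 by rewrite /r0 rad_sq.
set v := fun t : R => (1 - t) ^+ 2 *: x0 + (t ^+ 2 * sg * r0) *: e1.
have vpos : forall t, 0 < Defs.rad (v t).
  move=> t.
  have h : Defs.rad (v t) ^+ 2 = (1 - t) ^+ 2 ^+ 2 * r0 ^+ 2 + 2 * (1 - t) ^+ 2 * t ^+ 2 * `|a| * r0 + t ^+ 2 ^+ 2 * r0 ^+ 2.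
    rewrite rad_sq /v x1D x2D x3D x1e x2e x3e !mulr0 !addr0 !mulr1 -sga.
    rewrite -/a; set c1 := (1 - t) ^+ 2; set c2 := t ^+ 2.
    have -> : (c1 * a + c2 * sg * r0) ^+ 2 = c1 ^+ 2 * a ^+ 2 + 2 * c1 * c2 * (sg * a) * r0 + c2 ^+ 2 * sg ^+ 2 * r0 ^+ 2 by ring.
    rewrite sg2 r02; ring.
  have hc : 1 / 2 <= (1 - t) ^+ 2 + t ^+ 2 by have := sqr_ge0 (t - 1 / 2); nra.
  have hsq : 0 < Defs.rad (v t) ^+ 2.
    rewrite h.
    have : 0 <= 2 * (1 - t) ^+ 2 * t ^+ 2 * `|a| * r0.
      apply: mulr_ge0; last exact: ltW.
      apply: mulr_ge0 => //.
      apply: mulr_ge0; last exact: sqr_ge0.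
      by apply: mulr_ge0 => //; exact: sqr_ge0.
    have : 0 < ((1 - t) ^+ 2 ^+ 2 + t ^+ 2 ^+ 2) * r0 ^+ 2.
      apply: mulr_gt0; last exact: exprn_gt0.
      set c1 := (1 - t) ^+ 2 in hc *; set c2 := t ^+ 2 in hc *.
      have hh : 1 / 2 * (1 / 2) <= (c1 + c2) * (c1 + c2) by apply: ler_pM => //; lra.
      have := sqr_ge0 (c1 - c2); nra.
    lra.
  have := rad_ge0 (v t); rewrite le_eqVlt => /orP[/eqP h0|//].
  by rewrite -h0 expr0n /= ltxx in hsq.
have cv : continuous v.
  apply: contVD; apply: contVZ; try exact: cst_continuous.
    apply: cont_sq; apply: contB_; [exact: cont_cstR|exact: cont_idR].
  apply: contM_; last exact: cont_cstR.
  apply: contM_; last exact: cont_cstR.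
  exact: cont_sq cont_idR.
set p := fun t => (r0 / Defs.rad (v t)) *: v t.
have cp : continuous p.
  apply: contVZ => // t.
  apply: (@continuousM _ _ (fun=> r0) (fun t => (Defs.rad (v t))^-1)); first exact: cst_continuous.
  apply: (@continuousV _ _ (fun t => Defs.rad (v t))); first by rewrite gt_eqF.
  exact: (continuous_comp (cv t) (cont_rad (v t))).
have radp : forall t, Defs.rad (p t) = r0.
  move=> t; rewrite /p radZ ger0_norm ?divr_ge0 ?ltW //.
  by rewrite divfK // gt_eqF.
set q := fun s : R => (s * sg) *: e1.
have radq : forall s, 0 <= s -> Defs.rad (q s) = s.
  by move=> s s0; rewrite /q radZ rade mulr1 normrM nsg mulr1 ger0_norm.
have varq : forall s, 0 <= s -> varpi (q s) = s.
  by move=> s s0; rewrite /q varpiZ varpie mulr1 normrM nsg mulr1 ger0_norm.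
set S := r0 + `|M| + 1.
set P := p @` `[0, 1]; set Q := q @` `[r0, S].
have p0 : p 0 = x0.
  rewrite /p /v subr0 expr1n scale1r expr0n /= !mul0r scale0r addr0.
  by rewrite -/r0 divff ?gt_eqF // scale1r.
have p1 : p 1 = q r0.
  rewrite /p /v subrr expr0n /= scale0r add0r expr1n mul1r.
  rewrite radZ rade mulr1 normrM nsg mul1r gtr0_norm // divff ?gt_eqF // scale1r.
  by rewrite /q mulrC.
have PA : P `<=` A.
  move=> z [t _ <-]; split; first by rewrite radp.
  by apply: ups_shell => //; rewrite radp.
have QA : Q `<=` A.
  move=> z [s]; rewrite /= in_itv /= => /andP[hs1 hs2] <-.
  have s0 : 0 < s by apply: lt_le_trans hs1.
  split; first by rewrite radq ?ltW //; apply: lt_le_trans hs1.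
  rewrite /Upsilon radq ?ltW // varq ?ltW //.
  exact: key_gt0.
have cP : connected P.
  apply: connected_continuous_connected; first exact: segment_connected.
  exact: continuous_subspaceT.
have cQ : connected Q.
  apply: connected_continuous_connected; first exact: segment_connected.
  apply: continuous_subspaceT.
  apply: contVZ; last exact: cst_continuous.
  apply: contM_; [exact: cont_idR|exact: cont_cstR].
have cPQ : connected (P `|` Q).
  apply: connectedU => //; exists (q r0); split.
    by exists 1 => //; rewrite /= in_itv /= lexx ler01.
  exists r0 => //; rewrite /= in_itv /= lexx /= /S.
  have := normr_ge0 M; lra.
have sub : P `|` Q `<=` C.
  apply: connected_component_max => //.
    by left; exists 0 => //; rewrite /= in_itv /= lexx ler01.
  by move=> z [/PA|/QA].
have : C (q S).
  apply: sub; right; exists S => //; rewrite /= in_itv /= lexx andbT /S.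
  have := normr_ge0 M; lra.
move=> /hM; rewrite radq; last by rewrite /S; have := normr_ge0 M; lra.
rewrite /S; have := ler_norm M; lra.
Qed.

End S.

Theorem theorem1 (R : realType) (GM0 R0 Om Rr : R) :
  0 < GM0 -> 0 < R0 -> R0 < Rr ->
  forall x0 : 'rV[R]_3, shell R0 Rr x0 ->
  (bounded3 (connected_component (posregion GM0 R0 Om Rr) x0) <->
   Om ^+ 2 * R0 ^+ 3 / (2 * GM0) <= 4 / 27 * (R0 / Rr) ^+ 3).
Proof.
move=> hG hR0 hR x0 hx0.
have hRr : 0 < Rr by apply: lt_trans hR.
rewrite (@ineq_equiv R GM0 R0 Om Rr hG hR0 hRr); split.
  move=> hb; rewrite leNgt; apply/negP => hlt.
  exact: (@partB R GM0 R0 Om Rr x0 hG hR0 hR hx0 hlt hb).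
by move=> h; apply: partA.
Qed.
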